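(* Let $M=(Q,\underline q,\Sigma_I,\Sigma_O,h)$ be a deterministic, completely specified prime FSM with $n=|Q|\ge 2$ states and output function $\omega_M$, and let $R=R(q_1,x_1,Z_1)\wedge\dots\wedge R(q_k,x_k,Z_k)$ be a composite requirement on $M$ (with the pairs $(q_i,x_i)$ pairwise distinct, $\omega_M(q_i,x_i)\in Z_i\subsetneq\Sigma_O$). Let $M_1$ be the requirement abstraction of $M$, let $V\subseteq\Sigma_I^*$ with $\varepsilon\in V$ be a state cover of $M$, let $m\ge n$ be an integer, and let $A,B,C$, $\Delta_M$, $\Delta_{M_1}$, $A(M)$, $B(M_1)$, $C(M_1)$ be as defined in the context. Let $S=(S,\underline s,\Sigma_I,\Sigma_O,h_S)$ be a minimal, completely specified DFSM with $|S|\le m$. Let $TS\subseteq\Sigma_I^*$ be any test suite satisfying (1) $V.\bigcup_{i=0}^{m-n+1}\Sigma_I^i\subseteq TS$, and (2) for all $(\alpha,\beta)\in A(M)\cup B(M_1)\cup C(M_1)$ there exists $\gamma\in\Delta_M(\alpha,\beta)$ with $\alpha.\gamma\in TS$ and $\beta.\gamma\in TS$. Then if $S$ passes $TS$ (i.e. $\omega_S(\underline s,\bar x)=\omega_M(\underline q,\bar x)$ for every $\bar x\in TS$), it follows that $S\models R$.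
   Context: FSMs, DFSMs, languages, the extended transition/output functions $\delta,\omega$, the notation $q\text{-after-}\bar x=\delta(q,\bar x)$ and prime machines are as usual: a completely specified DFSM has for every (state,input) exactly one transition, given by $\delta(q,x)$ and output $\omega(q,x)$; these extend to input sequences by $\delta(q,\varepsilon)=q$, $\delta(q,x.\bar x)=\delta(\delta(q,x),\bar x)$, $\omega(q,\varepsilon)=\varepsilon$, $\omega(q,x.\bar x)=\omega(q,x).\omega(\delta(q,x),\bar x)$. A prime machine has minimal number of states among language-equivalent DFSMs. A state cover of $M$ is a set $V\subseteq\Sigma_I^*$ such that every state $q$ equals $\underline q\text{-after-}v$ for some $v\in V$. For sets of traces, $X.Y=\{x.y\mid x\in X,y\in Y\}$. Requirements: $\Pi(q)=\{\bar x\in\Sigma_I^*\mid \underline q\text{-after-}\bar x=q\}$ (computed in $M$). $S\models R(q,x,Z)$ iff $\omega_S(\underline s\text{-after-}\pi,x)\in Z$ for all $\pi\in\Pi(q)$; $S\models R$ for a conjunction iff $S$ satisfies every conjunct. Requirement abstraction $M_1$: the completely specified DFSM with state set $Q$, initial state $\underline q$, input alphabet $\Sigma_I$, output alphabet $\{\ast,Z_1,\dots,Z_k\}$ where $\ast=\Sigma_O$, transition function equal to that of $M$, and output function $\omega_{M_1}(q_i,x_i)=Z_i$ for $i=1,\dots,k$ and $\omega_{M_1}(q,x)=\ast$ for all other $(q,x)\in Q\times\Sigma_I$. Trace-pair sets: $A=V\times V$; $B=V\times\big(V.\bigcup_{i=1}^{m-n+1}\Sigma_I^i\big)$; $C=\{(\alpha,\beta)\mid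 \alpha$ is a prefix of $\beta$, $\alpha,\beta\in V.\bigcup_{i=1}^{m-n+1}\Sigma_I^i\}$. For input traces $\alpha,\beta$: $\Delta_M(\alpha,\beta)=\{\gamma\in\Sigma_I^*\mid\omega_M(\underline q\text{-after-}\alpha,\gamma)\ne\omega_M(\underline q\text{-after-}\beta,\gamma)\}$ and $\Delta_{M_1}(\alpha,\beta)$ is defined analogously with $\omega_{M_1}$. For a set $P$ of trace pairs, $P(M)=\{(\alpha,\beta)\in P\mid\Delta_M(\alpha,\beta)\neq\varnothing\}$ and $P(M_1)=\{(\alpha,\beta)\in P\mid\Delta_{M_1}(\alpha,\beta)\neq\varnothing\}$. *)

(* Defs.v *)
From mathcomp Require Import all_boot.
Set Implicit Arguments. Unset Strict Implicit. Unset Printing Implicit Defensive.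

Record dfsm (Q I O : Type) := DFSM {
  init : Q;
  trans : Q -> I -> Q;
  out : Q -> I -> O }.

Section FSM.
Variables (Q I O : Type) (M : dfsm Q I O).

Fixpoint delta_star (q : Q) (xs : seq I) : Q :=
  if xs is x :: xs' then delta_star (trans M q x) xs' else q.

Fixpoint omega_star (q : Q) (xs : seq I) : seq O :=
  if xs is x :: xs' then out M q x :: omega_star (trans M q x) xs' else [::].

Definition after (xs : seq I) : Q := delta_star (init M) xs.

Definition Pi (q : Q) (xs : seq I) : Prop := after xs = q.

Definition state_cover (V : seq I -> Prop) : Prop :=
  forall q : Q, exists2 v, V v & after v = q.
End FSM.

Definition lang (Q I O : Type) (M : dfsm Q I O) (xs : seq I) (ys : seq O) : Prop :=
  ys = omega_star M (init M) xs.

Definition lang_equiv (Q T I O : Type) (M : dfsm Q I O) (S : dfsm T I O) : Prop :=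
  forall xs ys, lang M xs ys <-> lang S xs ys.

Definition prime_fsm (Q I O : finType) (M : dfsm Q I O) : Prop :=
  forall (T : finType) (S : dfsm T I O), lang_equiv M S -> #|Q| <= #|T|.

Definition requirement (Q I O : finType) := seq (Q * I * {set O}).

Definition wf_requirement (Q I O : finType) (M : dfsm Q I O)
    (R : requirement Q I O) : Prop :=
  uniq [seq r.1 | r <- R] /\
  (forall r, r \in R -> out M r.1.1 r.1.2 \in r.2) /\
  (forall r, r \in R -> r.2 \proper [set: O]).

Definition sat_req1 (Q T I O : finType) (M : dfsm Q I O) (S : dfsm T I O)
    (q : Q) (x : I) (Z : {set O}) : Prop :=
  forall pi, Pi M q pi -> out S (after S pi) x \in Z.

Definition sat_req (Q T I O : finType) (M : dfsm Q I O) (S : dfsm T I O)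
    (R : requirement Q I O) : Prop :=
  forall r, r \in R -> sat_req1 M S r.1.1 r.1.2 r.2.

(* requirement abstraction M1: output alphabet {*, Z_1, ..., Z_k} modelled
   inside {set O}, where * = Sigma_O = [set: O] *)
Definition abs_out (Q I O : finType) (R : requirement Q I O) (q : Q) (x : I)
    : {set O} :=
  if [seq r.2 | r <- R & r.1 == (q, x)] is Z :: _ then Z else [set: O].

Definition req_abstraction (Q I O : finType) (M : dfsm Q I O)
    (R : requirement Q I O) : dfsm Q I {set O} :=
  DFSM (init M) (trans M) (abs_out R).

Definition Delta (Q I O : Type) (M : dfsm Q I O) (alpha beta gamma : seq I)
    : Prop :=
  omega_star M (after M alpha) gamma <> omega_star M (after M beta) gamma.

Definition Delta_ne (Q I O : Type) (M : dfsm Q I O) (alpha beta : seq I)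
    : Prop := exists gamma, Delta M alpha beta gamma.

Definition ext_set (I : Type) (V : seq I -> Prop) (lo hi : nat) (t : seq I)
    : Prop :=
  exists v w, [/\ V v, t = v ++ w & lo <= size w <= hi].

Definition pairsA (I : Type) (V : seq I -> Prop) (a b : seq I) : Prop :=
  V a /\ V b.
Definition pairsB (I : Type) (V : seq I -> Prop) (k : nat) (a b : seq I) : Prop :=
  V a /\ ext_set V 1 k b.
Definition pairsC (I : eqType) (V : seq I -> Prop) (k : nat) (a b : seq I)
    : Prop :=
  [/\ prefix a b, ext_set V 1 k a & ext_set V 1 k b].

(* Main.v *)
Require Import Defs.
From mathcomp Require Import all_boot.
From mathcomp Require Import zify.
From Stdlib Require Import Classical IndefiniteDescription.
Set Implicit Arguments. Unset Strict Implicit. Unset Printing Implicit Defensive.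

Lemma delta_cat (Q I O : Type) (M : dfsm Q I O) q a b :
  delta_star M q (a ++ b) = delta_star M (delta_star M q a) b.
Proof. by elim: a q => //= x a IH q. Qed.

Lemma omega_cat (Q I O : Type) (M : dfsm Q I O) q a b :
  omega_star M q (a ++ b) = omega_star M q a ++ omega_star M (delta_star M q a) b.
Proof. by elim: a q => //= x a IH q; rewrite IH. Qed.

Lemma size_omega (Q I O : Type) (M : dfsm Q I O) q a :
  size (omega_star M q a) = size a.
Proof. by elim: a q => //= x a IH q; rewrite IH. Qed.

Lemma cat_cancel (T : Type) (s1 s2 s3 s4 : seq T) :
  s1 ++ s2 = s3 ++ s4 -> size s1 = size s3 -> s2 = s4.
Proof.
elim: s1 s3 => [|x s1 IH] [|y s3] //= E.
by case: E => _ E [] Sz; apply: IH E Sz.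
Qed.

Lemma pass_split (Q T I O : Type) (M : dfsm Q I O) (S : dfsm T I O)
  (TS : seq I -> Prop) a g :
  (forall xs, TS xs -> omega_star S (init S) xs = omega_star M (init M) xs) ->
  TS (a ++ g) -> omega_star S (after S a) g = omega_star M (after M a) g.
Proof.
move=> P H; have := P _ H; rewrite !omega_cat => E.
rewrite /after; apply: (cat_cancel E); by rewrite !size_omega.
Qed.

Lemma sep (Q T I O : Type) (M : dfsm Q I O) (S : dfsm T I O)
  (TS : seq I -> Prop) a b g :
  (forall xs, TS xs -> omega_star S (init S) xs = omega_star M (init M) xs) ->
  Delta M a b g -> TS (a ++ g) -> TS (b ++ g) -> after S a <> after S b.
Proof.
move=> P D Ha Hb E; apply: D.
by rewrite -(pass_split P Ha) -(pass_split P Hb) E.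
Qed.

Definition eqv (Q I O : Type) (M : dfsm Q I O) a b :=
  forall g, omega_star M a g = omega_star M b g.

Lemma eqv_delta (Q I O : Type) (M : dfsm Q I O) a b u :
  eqv M a b -> eqv M (delta_star M a u) (delta_star M b u).
Proof.
elim: u a b => //= y u IH a b E; apply: IH => g.
by have := E (y :: g); case.
Qed.

Lemma delta_abs (Q I O : finType) (M : dfsm Q I O) R q a :
  delta_star (req_abstraction M R) q a = delta_star M q a.
Proof. by elim: a q => //= x a IH q. Qed.

Lemma prime_dist (Q I O : finType) (M : dfsm Q I O) q1 q2 :
  prime_fsm M -> q1 <> q2 -> exists g, omega_star M q1 g <> omega_star M q2 g.
Proof.
move=> pr ne; apply: NNPP => Hn.
have E : forall g, omega_star M q1 g = omega_star M q2 g.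
  move=> g; apply: NNPP => H; apply: Hn; by exists g.
have ne' : q1 != q2 by apply/eqP.
pose u0 : {q : Q | q != q2} := exist _ q1 ne'.
pose f (q : Q) : {q : Q | q != q2} := insubd u0 q.
pose M' := DFSM (f (init M)) (fun t x => f (trans M (val t) x))
                (fun t x => out M (val t) x).
have key : forall q g, omega_star M (val (f q)) g = omega_star M q g.
  move=> q g; rewrite /f val_insubd; case: ifP => // /negbFE /eqP ->.
  exact: E.
have L : forall t g, omega_star M' t g = omega_star M (val t) g.
  by move=> t g; elim: g t => //= x g IH t; rewrite IH key.
have le : #|Q| <= #|{: {q : Q | q != q2}}|.
  apply: (pr _ M') => xs ys; rewrite /lang /= L key //.
move: le; rewrite card_sig.
have -> : #|[pred x | x != q2]| = #|predC1 q2| by apply: eq_card.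
rewrite cardC1; have : 0 < #|Q| by apply/card_gt0P; exists q1.
lia.
Qed.

Lemma pigeon (A B : finType) (h : A -> B) :
  #|B| < #|A| -> exists a b, a <> b /\ h a = h b.
Proof.
move=> lt; apply: NNPP => N.
have inj : injective h.
  move=> a b e; case: (eqVneq a b) => // /eqP ne; exfalso; apply: N.
  by exists a, b.
by have := leq_card h inj; rewrite leqNgt lt.
Qed.

Lemma abs_out_in (Q I O : finType) (M : dfsm Q I O) R q x :
  wf_requirement M R -> out M q x \in abs_out R q x.
Proof.
case=> _ [H2 _]; rewrite /abs_out.
case E: [seq r.2 | r <- R & r.1 == (q, x)] => [|Z l]; first by rewrite in_setT.
have : Z \in [seq r.2 | r <- R & r.1 == (q, x)] by rewrite E mem_head.
case/mapP => r; rewrite mem_filter => /andP [/eqP e rR] ->.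
by have := H2 r rR; rewrite e.
Qed.

Lemma uniq_fst (A B : eqType) (s : seq (A * B)) r r' :
  uniq [seq p.1 | p <- s] -> r \in s -> r' \in s -> r.1 = r'.1 -> r = r'.
Proof.
elim: s => //= p s IH /andP [np us]; rewrite !inE.
case/orP => [/eqP ->|rs]; case/orP => [/eqP ->|rs'] // e.
- by move: np; rewrite e; case/negP; apply: map_f.
- by move: np; rewrite -e; case/negP; apply: map_f.
- exact: IH.
Qed.

Lemma abs_out_req (Q I O : finType) (M : dfsm Q I O) R r :
  wf_requirement M R -> r \in R -> abs_out R r.1.1 r.1.2 = r.2.
Proof.
case=> U _ rR; rewrite /abs_out -surjective_pairing.
have : r \in [seq p <- R | p.1 == r.1] by rewrite mem_filter eqxx.
case E: [seq p <- R | p.1 == r.1] => [|r' l] //= _.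
have : r' \in [seq p <- R | p.1 == r.1] by rewrite E mem_head.
rewrite mem_filter => /andP [/eqP e r'R].
by rewrite (uniq_fst U r'R rR e).
Qed.

Theorem theorem2 (Q I O : finType) (M : dfsm Q I O) (R : requirement Q I O)
    (V : seq I -> Prop) (m : nat) (T : finType) (S : dfsm T I O)
    (TS : seq I -> Prop) :
  prime_fsm M -> 2 <= #|Q| ->
  wf_requirement M R ->
  V [::] -> state_cover M V ->
  #|Q| <= m ->
  prime_fsm S -> #|T| <= m ->
  (forall t, ext_set V 0 (m - #|Q| + 1) t -> TS t) ->
  (forall alpha beta,
     (pairsA V alpha beta /\ Delta_ne M alpha beta) \/
     (pairsB V (m - #|Q| + 1) alpha beta /\
        Delta_ne (req_abstraction M R) alpha beta) \/
     (pairsC V (m - #|Q| + 1) alpha beta /\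
        Delta_ne (req_abstraction M R) alpha beta) ->
     exists gamma, [/\ Delta M alpha beta gamma,
                       TS (alpha ++ gamma) & TS (beta ++ gamma)]) ->
  (forall xs, TS xs -> omega_star S (init S) xs = omega_star M (init M) xs) ->
  sat_req M S R.
Proof.
move=> prM n2 wf V0 cover nm prS Tm H1 H2 pass.
move: H1 H2; set k := m - #|Q| + 1 => H1 H2.
have hk : k = m - #|Q| + 1 by [].
clearbody k.
have k1 : 0 < k by lia.
have cov' : forall q, {v | V v /\ after M v = q}.
  move=> q; apply: constructive_indefinite_description.
  by case: (cover q) => v Vv e; exists v.
pose vq q := sval (cov' q).
have Vvq : forall q, V (vq q) by move=> q; case: (svalP (cov' q)).
have avq : forall q, after M (vq q) = q by move=> q; case: (svalP (cov' q)).
pose M1 := req_abstraction M R.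
have sepB : forall a b, (pairsB V k a b \/ pairsC V k a b) ->
    after S a = after S b -> eqv M1 (after M a) (after M b).
  move=> a b P E g; apply: NNPP => D.
  have Dn : Delta_ne M1 a b.
    by exists g; rewrite /Delta /after /= !delta_abs.
  have [ga [Dg Ta Tb]] : exists ga, [/\ Delta M a b ga, TS (a ++ ga) & TS (b ++ ga)].
    by apply: H2; case: P => P; [right; left | right; right].
  exact: (sep pass Dg Ta Tb E).
have cong : forall a b u, eqv M1 (after M a) (after M b) ->
    eqv M1 (after M (a ++ u)) (after M (b ++ u)).
  move=> a b u E; have := eqv_delta u E; by rewrite !delta_abs /after !delta_cat.
have congS : forall a b u, after S a = after S b -> after S (a ++ u) = after S (b ++ u).
  by move=> a b u; rewrite /after !delta_cat => ->.
have inv : forall pi, exists v w, [/\ V v, size w <= k.-1,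
    after S (v ++ w) = after S pi & eqv M1 (after M (v ++ w)) (after M pi)].
  elim/last_ind => [|pi y IH].
    by exists [::], [::]; split.
  case: IH => v [w [Vv sw eS eM]].
  have tgtS : after S (v ++ rcons w y) = after S (rcons pi y).
    by rewrite -!cats1 catA; apply: congS.
  have tgtM : eqv M1 (after M (v ++ rcons w y)) (after M (rcons pi y)).
    by rewrite -!cats1 catA; apply: cong.
  case: (leqP (size (rcons w y)) k.-1) => [small|big].
    by exists v, (rcons w y); split.
  move: tgtS tgtM; set ww := rcons w y => tgtS tgtM.
  have sww : size ww = k by move: big; rewrite /ww size_rcons; lia.
  clearbody ww.
  have caseB : forall q (i : 'I_k), after S (vq q) = after S (v ++ take i.+1 ww) ->
      exists v0 w0, [/\ V v0, size w0 <= k.-1,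
        after S (v0 ++ w0) = after S (rcons pi y)
        & eqv M1 (after M (v0 ++ w0)) (after M (rcons pi y))].
    move=> q i e.
    have Hi := ltn_ord i.
    have P : pairsB V k (vq q) (v ++ take i.+1 ww).
      split; first exact: Vvq.
      exists v, (take i.+1 ww); split => //; rewrite size_takel; lia.
    have E1 := sepB _ _ (or_introl P) e.
    exists (vq q), (drop i.+1 ww); split.
    - exact: Vvq.
    - rewrite size_drop; lia.
    - by rewrite -tgtS -{2}(cat_take_drop i.+1 ww) catA; apply: congS.
    - move=> g; rewrite (cong _ _ (drop i.+1 ww) E1 g) -catA cat_take_drop.
      exact: tgtM.
  have caseC : forall (i j : 'I_k), i < j ->
      after S (v ++ take i.+1 ww) = after S (v ++ take j.+1 ww) ->
      exists v0 w0, [/\ V v0, size w0 <= k.-1,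
        after S (v0 ++ w0) = after S (rcons pi y)
        & eqv M1 (after M (v0 ++ w0)) (after M (rcons pi y))].
    move=> i j lt e.
    have Hi := ltn_ord i; have Hj := ltn_ord j.
    have P : pairsC V k (v ++ take i.+1 ww) (v ++ take j.+1 ww).
      split.
      - have ij : i.+1 <= j.+1 by apply: ltnW.
        rewrite prefix_catr // eqxx /= -(@take_takel _ i.+1 j.+1 ww ij).
        exact: prefix_take.
      - exists v, (take i.+1 ww); split => //; rewrite size_takel ?sww; lia.
      - exists v, (take j.+1 ww); split => //; rewrite size_takel ?sww; lia.
    have E1 := sepB _ _ (or_intror P) e.
    exists v, (take i.+1 ww ++ drop j.+1 ww); split => //.
    - rewrite size_cat size_drop size_takel; lia.
    - have eww : v ++ ww = (v ++ take j.+1 ww) ++ drop j.+1 ww.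
        by rewrite -catA cat_take_drop.
      rewrite catA -tgtS eww; exact: congS.
    - move=> g; rewrite catA (cong _ _ (drop j.+1 ww) E1 g) -catA cat_take_drop.
      exact: tgtM.
  pose h : (Q + 'I_k)%type -> T := sum_rect (fun _ => T) (fun q => after S (vq q))
    (fun i : 'I_k => after S (v ++ take i.+1 ww)).
  have ltc : #|T| < #|{: (Q + 'I_k)%type}| by rewrite card_sum card_ord; lia.
  have [a [b [ne he]]] := pigeon h ltc.
  case: a b ne he => [q|i] [q'|j] ne he /=.
  - exfalso.
    have qq : q <> q' by move=> e; apply: ne; rewrite e.
    case: (prime_dist prM qq) => g Dg.
    have [ga [Dga Ta Tb]] : exists ga, [/\ Delta M (vq q) (vq q') ga,
        TS (vq q ++ ga) & TS (vq q' ++ ga)].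
      apply: H2; left; split; first by split.
      by exists g; rewrite /Delta !avq.
    exact: (sep pass Dga Ta Tb he).
  - exact: caseB he.
  - exact: caseB (esym he).
  - case: (ltngtP i j) => [lt|gt|eq].
    + exact: caseC lt he.
    + exact: caseC gt (esym he).
    + by exfalso; apply: ne; rewrite (val_inj eq).
move=> r rR pi Hpi.
case: (inv pi) => v [w [Vv sw eS eM]].
have Tt : TS ((v ++ w) ++ [:: r.1.2]).
  apply: H1; exists v, (w ++ [:: r.1.2]); split => //; first by rewrite catA.
  rewrite size_cat /=; lia.
have := pass_split pass Tt; rewrite /= => -[] e.
rewrite -eS e.
have := eM [:: r.1.2]; rewrite /= => -[] e2.
have := @abs_out_in _ _ _ M R (after M (v ++ w)) r.1.2 wf.
by rewrite e2 Hpi (abs_out_req wf rR).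
Qed.
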